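(* Let $\Sigma$ be an alphabet with $|\Sigma|\geq 3$ and $n\geq 1$. If $g\colon\mathcal{T}(\Sigma)^n\to\mathcal{T}(\Sigma)$ is WCP and $g(\Sigma^n)\subseteq\Sigma$, then the restriction of $g$ to $\Sigma^n$ is either a constant function or a projection $\pi_i^n$ (for some $i\in\{1,\ldots,n\}$, $\pi_i^n(a_1,\ldots,a_n)=a_i$).
   Context: Let $\Sigma$ be an alphabet not containing $0,1$. A binary tree over $\Sigma$ is a finite set $t \subseteq \{0,1\}^*\Sigma$ such that for any $ua, vb \in t$ with $ua \neq vb$, $u$ is not a prefix of $v$ and $v$ is not a prefix of $u$; $\mathcal{T}(\Sigma)$ is the set of such trees, $\mathbf 0=\emptyset$, each letter $a$ is identified with $\{a\}$, and $t\star t' = 0.t\cup 1.t'$. Every map $h\colon\Sigma\to\mathcal{T}(\Sigma)$ extends uniquely to an endomorphism of $\langle\mathcal{T}(\Sigma),\star\rangle$, still denoted $h$. A function $g\colon\mathcal{T}(\Sigma)^n\to\mathcal{T}(\Sigma)$ is WCP if for every idempotent mapping $h\colon\Sigma\to\Sigma$ and all $\vec u,\vec v\in\Sigma^n$, $h(\vec u)=h(\vec v)$ implies $h(g(\vec u))=h(g(\vec v))$, where $h(\langle u_1,\ldots,u_n\rangle)=\langle h(u_1),\ldots,h(u_n)\rangle$. *)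

(* Defs.v *)
From HB Require Import structures.
From mathcomp Require Import all_boot.
From mathcomp Require Import finmap.
Set Implicit Arguments. Unset Strict Implicit. Unset Printing Implicit Defensive.
Local Open Scope fset_scope.

(* A word of {0,1}^* Sigma is a pair (u, a) with u : seq bool (false = 0,
   true = 1) and a : Sigma. *)
Definition is_tree (S : finType) (t : {fset seq bool * S}) : bool :=
  [forall x : t, forall y : t,
     (val x != val y) ==>
       (~~ prefix (val x).1 (val y).1 && ~~ prefix (val y).1 (val x).1)].

(* T(Sigma): binary trees over Sigma *)
Record tree (S : finType) := Tree { tval :> {fset seq bool * S};
                                    tvalP : is_tree tval }.

Lemma letter_is_tree (S : finType) (a : S) : is_tree [fset ([::], a)].
Proof.
apply/forallP => x; apply/forallP => y; apply/implyP => Hxy.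
have := valP x; have := valP y; rewrite !inE => /eqP Ey /eqP Ex.
by move: Hxy; rewrite Ex Ey eqxx.
Qed.

Definition letter (S : finType) (a : S) : tree S := Tree (letter_is_tree a).

(* Extension of h : Sigma -> Sigma (letter-valued) to an endomorphism of
   <T(Sigma), *>: it relabels each leaf u a into u h(a). *)
Definition hext (S : finType) (h : S -> S) (t : {fset seq bool * S})
  : {fset seq bool * S} :=
  [fset (p.1, h p.2) | p in t].

Definition idempotent_map (S : finType) (h : S -> S) : Prop :=
  forall x, h (h x) = h x.

Definition WCP (S : finType) (n : nat) (g : n.-tuple (tree S) -> tree S) : Prop :=
  forall h : S -> S, idempotent_map h ->
  forall u v : n.-tuple S, map_tuple h u = map_tuple h v ->
    hext h (g (map_tuple (@letter S) u)) = hext h (g (map_tuple (@letter S) v)).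

(* Main.v *)
Require Import Defs.
From HB Require Import structures.
From mathcomp Require Import all_boot.
From mathcomp Require Import finmap.
Set Implicit Arguments. Unset Strict Implicit. Unset Printing Implicit Defensive.

Definition rep (S : eqType) (c x : S) (w : S) := if w == c then x else w.

Lemma rep_idem (S : finType) (c x : S) : idempotent_map (rep c x).
Proof.
move=> w; rewrite /rep; case: (eqVneq w c) => [_|wc] /=.
  by case: (eqVneq x c).
by rewrite (negbTE wc).
Qed.

Section Comb.
Variables (S : finType) (n : nat) (f : n.-tuple S -> S).
Hypothesis W : forall h : S -> S, idempotent_map h ->
  forall u v : n.-tuple S, map_tuple h u = map_tuple h v -> h (f u) = h (f v).
Variables x0 y0 z0 : S.
Hypotheses (xy : x0 != y0) (xz : x0 != z0) (yz : y0 != z0).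

Lemma others (c : S) : exists a b, [/\ a != b, a != c & b != c].
Proof.
case: (eqVneq c x0) => [->|cx].
  by exists y0, z0; split => //; rewrite eq_sym.
case: (eqVneq c y0) => [->|cy].
  by exists x0, z0; split => //; rewrite eq_sym.
by exists x0, y0; split => //; rewrite eq_sym.
Qed.

Lemma third (c d : S) : exists e, e != c /\ e != d.
Proof.
have [a [b [ab ac bc]]] := others c.
case: (eqVneq a d) => [ad|ad]; last by exists a.
by exists b; split => //; rewrite -ad eq_sym.
Qed.

Lemma noncons (n0 : 0 < n) u : f u \notin (u : seq S) -> forall v, f v = f u.
Proof.
set c := f u => cu.
have L1 : forall v : n.-tuple S, c \notin (v : seq S) -> f v = c.
  move=> v cv; set e := tnth u (Ordinal n0).
  pose h := fun w => if (w \in (u : seq S)) || (w \in (v : seq S)) then e else w.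
  have eu : e \in (u : seq S) by apply: mem_tnth.
  have hi : idempotent_map h.
    move=> w; rewrite /h.
    by case H: ((w \in (u : seq S)) || (w \in (v : seq S))); [case: ifP | rewrite H].
  have huv : map_tuple h u = map_tuple h v.
    by apply: eq_from_tnth => i; rewrite !tnth_map /h !mem_tnth ?orbT.
  have := W hi huv; rewrite {1}/h (negbTE cu) (negbTE cv) /=.
  rewrite /h; case: ifP => // _ ce.
  by move: cu; rewrite /c ce eu.
move=> v.
have key : forall x, x != c -> f v = c \/ f v = x.
  move=> x xc; pose v' := map_tuple (rep c x) v.
  have cv' : c \notin (v' : seq S).
    apply/negP => /tnthP [j]; rewrite tnth_map /rep; case: ifP => [_ cx | H ce].
      by move: xc; rewrite cx eqxx.
    by move: H; rewrite -ce eqxx.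
  have fv' := L1 _ cv'.
  have E : map_tuple (rep c x) v = map_tuple (rep c x) v'.
    by apply: eq_from_tnth => i; rewrite !tnth_map rep_idem.
  have := W (@rep_idem S c x) E; rewrite fv' /rep eqxx.
  by case: (eqVneq (f v) c) => [->|_ ->]; [left | right].
have [a [b [ab ac bc]]] := others c.
case: (key a ac) => // Ha; case: (key b bc) => // Hb.
by move: ab; rewrite -Ha -Hb eqxx.
Qed.

Section Cons.
Hypothesis cons : forall u : n.-tuple S, f u \in (u : seq S).

Lemma comm_idem h : idempotent_map h -> forall u, f (map_tuple h u) = h (f u).
Proof.
move=> hi u.
have E : map_tuple h u = map_tuple h (map_tuple h u).
  by apply: eq_from_tnth => i; rewrite !tnth_map hi.
rewrite (W hi E); have := cons (map_tuple h u).
by case/tnthP => i ->; rewrite tnth_map hi.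
Qed.

Definition E c d (A : {set 'I_n}) : n.-tuple S :=
  [tuple if i \in A then c else d | i < n].
Definition Fp c d A := f (E c d A) == c.

Lemma E_val c d A : f (E c d A) = c \/ f (E c d A) = d.
Proof.
have := cons (E c d A); case/tnthP => i ->; rewrite tnth_mktuple.
by case: ifP; auto.
Qed.

Lemma Fl A {c d e} : c != d -> e != d -> Fp e d A = Fp c d A.
Proof.
move=> cd ed; have dc : (d == c) = false by rewrite eq_sym (negbTE cd).
have M : map_tuple (rep c e) (E c d A) = E e d A.
  by apply: eq_from_tnth => i; rewrite tnth_map !tnth_mktuple /rep;
     case: (i \in A); rewrite /= ?eqxx ?dc.
rewrite /Fp -M comm_idem; last exact: rep_idem.
case: (E_val c d A) => ->; rewrite /rep ?eqxx ?dc // ?eqxx.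
by rewrite eq_sym (negbTE ed).
Qed.

Lemma Fr A {c d e} : c != d -> e != c -> Fp c e A = Fp c d A.
Proof.
move=> cd ec; have cdF : (c == d) = false by rewrite (negbTE cd).
have M : map_tuple (rep d e) (E c d A) = E c e A.
  by apply: eq_from_tnth => i; rewrite tnth_map !tnth_mktuple /rep;
     case: (i \in A); rewrite /= ?eqxx ?cdF.
rewrite /Fp -M comm_idem; last exact: rep_idem.
case: (E_val c d A) => ->; rewrite /rep ?eqxx ?cdF ?eqxx // ?eqxx.
by rewrite (negbTE ec) eq_sym cdF.
Qed.

Lemma Fall A c d c' d' : c != d -> c' != d' -> Fp c d A = Fp c' d' A.
Proof.
move=> cd cd'.
case: (eqVneq c' d) => [E1|c'd]; last first.
  have dc' : d != c' by rewrite eq_sym.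
  by rewrite -(@Fl A c d c' cd c'd) (@Fr A c' d' d cd' dc').
subst c'.
case: (eqVneq d' c) => [E2|d'c].
  subst d'. have [e [ec ed]] := third c d.
  have dc : d != c by rewrite eq_sym.
  have ce : c != e by rewrite eq_sym.
  by rewrite -(@Fl A c d e cd ed) -(@Fr A e d c ed ce) (@Fl A d c e dc ec).
have cd'' : c != d' by rewrite eq_sym.
by rewrite -(@Fr A c d d' cd d'c) -(@Fl A c d' d cd'' cd').
Qed.

Definition F A := Fp x0 y0 A.

Definition T (A B : {set 'I_n}) : n.-tuple S :=
  [tuple if i \in A then x0 else if i \in B then y0 else z0 | i < n].

Lemma T_val (A B : {set 'I_n}) : [\/ f (T A B) = x0, f (T A B) = y0 | f (T A B) = z0].
Proof.
have := cons (T A B); case/tnthP => i ->; rewrite tnth_mktuple.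
by case: ifP => _; [|case: ifP => _]; auto using Or31, Or32, Or33.
Qed.

Let xyF : (x0 == y0) = false. Proof. exact: negbTE. Qed.
Let xzF : (x0 == z0) = false. Proof. exact: negbTE. Qed.
Let yzF : (y0 == z0) = false. Proof. exact: negbTE. Qed.
Let yxF : (y0 == x0) = false. Proof. by rewrite eq_sym xyF. Qed.
Let zxF : (z0 == x0) = false. Proof. by rewrite eq_sym xzF. Qed.
Let zyF : (z0 == y0) = false. Proof. by rewrite eq_sym yzF. Qed.
Let yx : y0 != x0. Proof. by rewrite eq_sym. Qed.
Let zx : z0 != x0. Proof. by rewrite eq_sym. Qed.

Lemma TA (A B : {set 'I_n}) : (f (T A B) == x0) = F A.
Proof.
have M : map_tuple (rep z0 y0) (T A B) = E x0 y0 A.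
  apply: eq_from_tnth => i; rewrite tnth_map !tnth_mktuple /rep.
  by case: (i \in A); case: (i \in B); rewrite /= ?eqxx ?xzF ?yzF.
rewrite /F /Fp -M comm_idem; last exact: rep_idem.
by case: (T_val A B) => ->; rewrite /rep ?eqxx ?xzF ?yzF ?yxF ?eqxx.
Qed.

Lemma TB (A B : {set 'I_n}) : (forall i, i \in A -> i \notin B) -> (f (T A B) == y0) = F B.
Proof.
move=> dAB; rewrite /F -(@Fall B y0 x0 x0 y0 yx xy).
have M : map_tuple (rep z0 x0) (T A B) = E y0 x0 B.
  apply: eq_from_tnth => i; rewrite tnth_map !tnth_mktuple /rep.
  case: (boolP (i \in A)) => iA; first by rewrite (negbTE (dAB i iA)) /= xzF.
  by case: (i \in B); rewrite /= ?eqxx ?yzF.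
rewrite /Fp -M comm_idem; last exact: rep_idem.
by case: (T_val A B) => ->; rewrite /rep ?eqxx ?xzF ?yzF ?xyF ?yxF ?eqxx.
Qed.

Lemma TC (A B : {set 'I_n}) : (f (T A B) == z0) = F (~: (A :|: B)).
Proof.
rewrite /F -(@Fall _ z0 x0 x0 y0 zx xy).
have M : map_tuple (rep y0 x0) (T A B) = E z0 x0 (~: (A :|: B)).
  apply: eq_from_tnth => i; rewrite tnth_map !tnth_mktuple /rep !inE.
  by case: (i \in A); case: (i \in B); rewrite /= ?eqxx ?xyF ?zyF.
rewrite /Fp -M comm_idem; last exact: rep_idem.
by case: (T_val A B) => ->; rewrite /rep ?eqxx ?xyF ?zyF ?xzF ?zxF ?eqxx.
Qed.

Lemma F_setT : F setT.
Proof.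
rewrite /F /Fp; have := cons (E x0 y0 setT); case/tnthP => i ->.
by rewrite tnth_mktuple in_setT.
Qed.

Lemma F_compl (A : {set 'I_n}) : F (~: A) = ~~ F A.
Proof.
have M : E x0 y0 (~: A) = E y0 x0 A.
  by apply: eq_from_tnth => i; rewrite !tnth_mktuple inE; case: (i \in A).
rewrite /F -(@Fall A y0 x0 x0 y0 yx xy).
rewrite /Fp M; case: (E_val y0 x0 A) => ->; by rewrite ?eqxx ?yxF.
Qed.

Lemma F_disj (A B : {set 'I_n}) : (forall i, i \in A -> i \notin B) -> F A -> F B -> False.
Proof.
move=> dAB FA FB; move: (FA) (FB); rewrite -(TA A B) -(TB dAB).
by move=> /eqP -> ; rewrite xyF.
Qed.

Lemma F_three (A B : {set 'I_n}) : (forall i, i \in A -> i \notin B) -> ~~ F A -> ~~ F B ->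
  F (~: (A :|: B)).
Proof.
move=> dAB; rewrite -(TA A B) -(TB dAB) -TC.
by case: (T_val A B) => ->; rewrite ?eqxx.
Qed.

Lemma F_up (A B : {set 'I_n}) : A \subset B -> F A -> F B.
Proof.
move=> sAB FA; apply/negPn/negP => nFB.
rewrite -F_compl in nFB.
apply: (F_disj _ FA nFB) => i iA; rewrite inE negbK.
exact: (subsetP sAB).
Qed.

Lemma F_cap (A B : {set 'I_n}) : F A -> F B -> F (A :&: B).
Proof.
move=> FA FB; apply/negPn/negP => nP.
have d1 : forall i, i \in A :&: B -> i \notin A :\: B.
  by move=> i; rewrite !inE => /andP [-> ->].
case: (boolP (F (A :\: B))) => FQ.
  by apply: (F_disj _ FQ FB) => i; rewrite !inE => /andP [->].
have := F_three d1 nP FQ; rewrite setID F_compl FA //.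
Qed.

Lemma proj : exists i, forall u, f u = tnth u i.
Proof.
case: (@arg_minnP _ setT F (fun A => #|A|) F_setT) => M FM Mmin.
have sub : forall B, F B -> M \subset B.
  move=> B FB; have FMB := F_cap FM FB.
  have := Mmin _ FMB => le.
  have : M :&: B = M.
    apply/eqP; rewrite eqEcard subsetIl le //.
  by move=> <-; apply: subsetIr.
have : M != set0.
  apply/negP => /eqP M0; move: FM; rewrite M0 -setCT F_compl F_setT //.
case/set0Pn => i iM.
have Fi : forall A, F A = (i \in A).
  move=> A; apply/idP/idP => [FA|iA]; first exact: (subsetP (sub _ FA)).
  apply/negPn/negP; rewrite -F_compl => /sub /subsetP /(_ _ iM).
  by rewrite inE iA.
exists i => u; set c := f u.
have [d [b [_ dc _]]] := others c.
pose h := fun w => if w == c then c else d.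
have hi : idempotent_map h.
  move=> w; rewrite /h; case: (eqVneq w c) => _ /=; rewrite ?eqxx //.
  by rewrite (negbTE dc).
have M1 : map_tuple h u = E c d [set j | tnth u j == c].
  by apply: eq_from_tnth => j; rewrite tnth_map tnth_mktuple inE /h.
have : Fp c d [set j | tnth u j == c].
  by rewrite /Fp -M1 comm_idem // /h /c eqxx.
rewrite (@Fall _ c d x0 y0) //; last by rewrite eq_sym.
by rewrite -/(F _) Fi inE => /eqP ->.
Qed.

End Cons.
End Comb.

Lemma three (S : finType) : 2 < #|S| ->
  exists x y z : S, [/\ x != y, x != z & y != z].
Proof.
rewrite cardT; have := enum_uniq S.
case: (enum S) => [|x [|y [|z s]]] //= /andP [Hx /andP [Hy _]] _.
rewrite !inE !negb_or in Hx Hy.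
case/and3P: Hx => xy xz _; case/andP: Hy => yz _.
by exists x, y, z.
Qed.

Lemma tree_ext (S : finType) (t1 t2 : tree S) : Defs.tval t1 = Defs.tval t2 -> t1 = t2.
Proof.
case: t1 t2 => [v1 p1] [v2 p2] /= E; subst; congr Tree; apply: bool_irrelevance.
Qed.

Lemma hext1 (S : finType) (h : S -> S) (a : S) :
  hext h [fset ([::], a)]%fset = [fset ([::], h a)]%fset.
Proof.
apply/fsetP => p; rewrite inE; apply/imfsetP/eqP => [[q]|->].
  by rewrite inE => /eqP -> ->.
by exists ([::], a); rewrite ?inE.
Qed.

Theorem mainTheorem9 (S : finType) (n : nat) (g : n.-tuple (tree S) -> tree S) :
  2 < #|S| -> 0 < n ->
  WCP g ->
  (forall u : n.-tuple S, exists a : S, g (map_tuple (@letter S) u) = letter a) ->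
  (exists c : S, forall u : n.-tuple S, g (map_tuple (@letter S) u) = letter c) \/
  (exists i : 'I_n, forall u : n.-tuple S,
      g (map_tuple (@letter S) u) = letter (tnth u i)).
Proof.
move=> S3 n0 Wg Hg.
have ex : forall u : n.-tuple S, exists a : S,
    Defs.tval (g (map_tuple (@letter S) u)) == [fset ([::], a)]%fset.
  by move=> u; have [a ->] := Hg u; exists a.
pose f u := xchoose (ex u).
have gf : forall u, g (map_tuple (@letter S) u) = letter (f u).
  by move=> u; apply: tree_ext; apply/eqP; exact: (xchooseP (ex u)).
have W : forall h : S -> S, idempotent_map h ->
    forall u v : n.-tuple S, map_tuple h u = map_tuple h v -> h (f u) = h (f v).
  move=> h hi u v huv; have := Wg h hi u v huv.
  by rewrite !gf /= !hext1 => /fset1_inj [].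
have [x [y [z [xy xz yz]]]] := three S3.
case: (boolP [forall u : n.-tuple S, f u \in (u : seq S)]) => C.
  right; have [i Hi] := proj W xy xz yz (fun u => (forallP C) u).
  by exists i => u; rewrite gf Hi.
left; case/forallPn: C => u fu.
by exists (f u) => v; rewrite gf (noncons W xy xz yz n0 fu).
Qed.
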